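(* Let $G$ be a map graph with a corresponding planar bipartite graph $B$ and let $k$ be a positive integer. Let $\mathcal{C}\in\mathscr{S}$ and write $\mathcal{C}=\mathcal{C}_1\uplus\mathcal{C}_2$, where a cycle belongs to $\mathcal{C}_1$ if and only if it is a triangle contained in a special clique of $G$. Let $K_1$ and $K_2$ be special cliques of $G$. Then there do not exist two distinct vertices $u,v\in V(\mathcal{C}_2)\cap K_1\cap K_2$ and four edges $e_1,e_2,e_3,e_4$ such that (a) $e_1,e_2\in E(\mathcal{C}_2)\cap E(K_1)$, (b) $e_3,e_4\in E(\mathcal{C}_2)\cap E(K_2)$, (c) $u$ is incident with $e_1$ and $e_3$, and (d) $v$ is incident with $e_2$ and $e_4$.
   Context: All graphs are finite and simple. For a set $\mathcal{C}_2$ of cycles, $V(\mathcal{C}_2)$ and $E(\mathcal{C}_2)$ denote the union of their vertex sets and edge sets; $E(K)$ denotes the set of edges with both endpoints in $K$. For a bipartite graph $B$ with bipartition $V(B)=W\uplus U$, the half-square of $B$ is the graph on $W$ in which two vertices are adjacent iff they are at distance exactly $2$ in $B$. A graph $G$ is a map graph iff it is the half-square of some planar bipartite graph $B$; such $B$ (with $W=V(G)$) is a corresponding planar bipartite graph; for each $s\in U$, $N_B(s)$ is a clique of $G$ called a special clique. A solution is a set of $k$ pairwise vertex-disjoint cycles of $G$. $\mathscr{S}$ denotes the set of solutions consisting only of induced cycles of $G$ that, among all such solutions, have the maximum number of members that are triangles contained in a special clique. *)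

(* Defs.v *)
From Stdlib Require Import Reals.
From mathcomp Require Import all_boot.

Set Implicit Arguments.
Unset Strict Implicit.
Unset Printing Implicit Defensive.

(* Planarity: a finite simple graph (V, adj) is planar iff it admits a *)
(* drawing in the plane R^2: distinct points for vertices and, for each *)
(* edge, a Jordan arc (continuous injective image of [0,1]) joining its *)
(* endpoints, whose interior avoids all vertex points and the interiors *)
(* of the arcs of all other edges.                                     *)

Section Planarity.
Local Open Scope R_scope.

(* sup-distance on R^2 (induces the usual topology) *)
Definition pdist (p q : R * R) : R :=
  Rmax (Rabs (fst p - fst q)) (Rabs (snd p - snd q)).

Definition jordan_arc (g : R -> R * R) : Prop :=
  (forall t : R, (0 <= t <= 1) -> forall eps : R, (0 < eps) ->
     exists delta : R, (0 < delta) /\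
       forall t' : R, (0 <= t' <= 1) -> (Rabs (t' - t) < delta) ->
         (pdist (g t') (g t) < eps)) /\
  (forall t t' : R, (0 <= t <= 1) -> (0 <= t' <= 1) -> g t = g t' -> t = t').

Definition planar (V : finType) (adj : rel V) : Prop :=
  exists (p : V -> R * R) (gam : V -> V -> R -> R * R),
    injective p /\
    (forall x y, adj x y ->
       [/\ jordan_arc (gam x y), gam x y 0 = p x, gam x y 1 = p y,
           (forall t : R, gam y x t = gam x y (1 - t)) &
           (forall (t : R) z, (0 < t < 1) -> gam x y t <> p z)]) /\
    (forall x y x' y', adj x y -> adj x' y' -> [set x; y] != [set x'; y'] ->
       forall t t' : R, (0 < t < 1) -> (0 < t' < 1) -> gam x y t <> gam x' y' t').

End Planarity.

(* Bipartite graphs B with bipartition W (+) U, given by r : W -> U -> bool *)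

Definition bip_adj (W U : finType) (r : W -> U -> bool) : rel (W + U)%type :=
  fun a b => match a, b with
             | inl w, inr s => r w s
             | inr s, inl w => r w s
             | _, _ => false
             end.

(* half-square of B on W: distance exactly 2 in B (B is bipartite, so this
   means distinct with a common neighbour in U) *)
Definition half_square (W U : finType) (r : W -> U -> bool) : rel W :=
  fun x y => (x != y) && [exists s : U, r x s && r y s].

Definition special_clique (W U : finType) (r : W -> U -> bool) (s : U) : {set W} :=
  [set w | r w s].

(* Cycles of a graph (W, g): represented by the cyclic sequence of their *)
(* vertices.                                                             *)

Section Cycles.
Variable W : finType.
Variable g : rel W.

Definition is_cycle (c : seq W) : Prop :=
  [/\ 3 <= size c, uniq c & cycle g c].

Definition cverts (c : seq W) : {set W} := [set x in c].

(* edges of the cycle, as 2-element vertex sets *)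
Definition cedges (c : seq W) : {set {set W}} :=
  [set [set x; next c x] | x in cverts c].

Definition is_induced_cycle (c : seq W) : Prop :=
  is_cycle c /\
  forall x y, x \in c -> y \in c -> g x y -> [set x; y] \in cedges c.

Definition solution (k : nat) (C : seq (seq W)) : Prop :=
  [/\ size C = k, (forall c, c \in C -> is_cycle c) &
      (forall i j, i < size C -> j < size C -> i != j ->
         [disjoint cverts (nth [::] C i) & cverts (nth [::] C j)])].

Definition induced_solution (k : nat) (C : seq (seq W)) : Prop :=
  solution k C /\ (forall c, c \in C -> is_induced_cycle c).

(* edge set E(K) of the graph g restricted to K *)
Definition is_edge (e : {set W}) : Prop :=
  exists x y, g x y /\ e = [set x; y].

End Cycles.

Definition special_triangle (W U : finType) (r : W -> U -> bool) (c : seq W) : bool :=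
  (size c == 3) && [exists s : U, cverts c \subset special_clique r s].

Definition n_special_triangles (W U : finType) (r : W -> U -> bool)
  (C : seq (seq W)) : nat := count (special_triangle r) C.

Definition in_scrS (W U : finType) (r : W -> U -> bool) (g : rel W) (k : nat)
  (C : seq (seq W)) : Prop :=
  induced_solution g k C /\
  forall C', induced_solution g k C' ->
    n_special_triangles r C' <= n_special_triangles r C.

Definition C2_part (W U : finType) (r : W -> U -> bool) (C : seq (seq W)) :=
  [seq c <- C | ~~ special_triangle r c].

Definition verts_of (W : finType) (C : seq (seq W)) : {set W} :=
  \bigcup_(c <- C) cverts c.

Definition edges_of (W : finType) (C : seq (seq W)) : {set {set W}} :=
  \bigcup_(c <- C) cedges c.

(* Main.v *)
Require Import Defs.
From Stdlib Require Import Reals.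
From mathcomp Require Import all_boot.

Set Implicit Arguments.
Unset Strict Implicit.
Unset Printing Implicit Defensive.

Lemma count_lt (T : Type) (p : pred T) x0 (s1 s2 : seq T) :
  size s1 = size s2 ->
  (forall n, n < size s1 -> p (nth x0 s1 n) <= p (nth x0 s2 n)) ->
  count p s1 <= count p s2 /\
  ((exists2 n, n < size s1 & p (nth x0 s1 n) < p (nth x0 s2 n)) ->
     count p s1 < count p s2).
Proof.
elim: s1 s2 => [|x s1 IH] [|y s2] //=.
  by move=> _ _; split=> // [[n]].
move=> [Hs] H.
have H0 := H 0 isT.
have [IHle IHlt] := IH s2 Hs (fun n Hn => H n.+1 Hn).
split; first by apply: leq_add.
case=> [[|n]] Hn Hlt /=.
  by rewrite -addSn leq_add.
by rewrite -addnS leq_add // IHlt //; exists n.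
Qed.

Lemma in_bigcup_seq (I : eqType) (W : finType) (F : I -> {set W}) (s : seq I) x :
  x \in \bigcup_(c <- s) F c -> exists c, c \in s /\ x \in F c.
Proof.
elim: s => [|c s IH]; first by rewrite big_nil inE.
rewrite big_cons inE => /orP [H|/IH [c' [H1 H2]]].
  by exists c; rewrite mem_head.
by exists c'; rewrite inE H1 orbT.
Qed.

Lemma sol_idx (W : finType) (g : rel W) k C i j x :
  solution g k C -> i < size C -> j < size C ->
  x \in nth [::] C i -> x \in nth [::] C j -> i = j.
Proof.
move=> [_ _ Hd] Hi Hj Hxi Hxj.
case: (eqVneq i j) => // Hne.
have := disjointFr (Hd i j Hi Hj Hne) (_ : x \in cverts (nth [::] C i)).
by rewrite !inE Hxi Hxj => /(_ isT).
Qed.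

Lemma edge_C2 (W U : finType) (r : W -> U -> bool) (C : seq (seq W)) e :
  e \in edges_of (C2_part r C) ->
  exists2 i, i < size C &
    e \subset cverts (nth [::] C i) /\ ~~ special_triangle r (nth [::] C i).
Proof.
move=> /in_bigcup_seq [c [Hc He]].
move: Hc; rewrite mem_filter => /andP [Hns HcC].
exists (index c C); first by rewrite index_mem.
rewrite nth_index //; split => //.
move: He => /imsetP [x Hx ->].
apply/subsetP => y; rewrite !inE => /orP [/eqP ->|/eqP ->]; first by move: Hx; rewrite inE.
by rewrite mem_next; move: Hx; rewrite inE.
Qed.

Lemma triangle_ok (W U : finType) (r : W -> U -> bool) (g : rel W)
  (HG : forall x y, g x y = half_square r x y) (s : U) x y z :
  x \in special_clique r s -> y \in special_clique r s -> z \in special_clique r s ->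
  x != y -> y != z -> z != x ->
  is_induced_cycle g [:: x; y; z] /\ special_triangle r [:: x; y; z].
Proof.
move=> Hx Hy Hz Hxy Hyz Hzx.
have adj : forall a b, a \in special_clique r s -> b \in special_clique r s ->
   a != b -> g a b.
  move=> a b; rewrite HG !inE => Ha Hb Hab; rewrite /half_square Hab /=.
  by apply/existsP; exists s; rewrite Ha Hb.
have Hg0 : forall a, g a a = false by move=> a; rewrite HG /half_square eqxx.
have Hyx : (y == x) = false by apply/negbTE; rewrite eq_sym.
have Hxz : (x == z) = false by apply/negbTE; rewrite eq_sym.
have Hzy : (z == y) = false by apply/negbTE; rewrite eq_sym.
have Nx : next [:: x; y; z] x = y by rewrite /next /= eqxx.
have Ny : next [:: x; y; z] y = z by rewrite /next /= Hyx eqxx.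
have Nz : next [:: x; y; z] z = x by rewrite /next /= (negbTE Hzx) Hzy eqxx.
split; last first.
  rewrite /special_triangle /=; apply/existsP; exists s.
  move: Hx Hy Hz; rewrite !inE => Hx Hy Hz.
  apply/subsetP => w; rewrite [w \in cverts _]inE !inE.
  by case/or3P => /eqP->.
rewrite /is_induced_cycle /is_cycle; split.
  split => //=; first by rewrite !inE negb_or Hxy eq_sym Hzx Hyz.
  by rewrite !adj // eq_sym.
have E : forall a, a \in [:: x; y; z] -> [set a; next [:: x; y; z] a] \in cedges [:: x; y; z].
  by move=> a Ha; apply/imsetP; exists a => //; rewrite inE.
move=> p q; rewrite !inE => /or3P [/eqP->|/eqP->|/eqP->] /or3P [/eqP->|/eqP->|/eqP->];
  rewrite ?Hg0 // => _.
- by rewrite -[X in [set _; X]]Nx E // !inE eqxx ?orbT.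
- by rewrite setUC -[X in [set _; X]]Nz E // !inE eqxx ?orbT.
- by rewrite setUC -[X in [set _; X]]Nx E // !inE eqxx ?orbT.
- by rewrite -[X in [set _; X]]Ny E // !inE eqxx ?orbT.
- by rewrite -[X in [set _; X]]Nz E // !inE eqxx ?orbT.
- by rewrite setUC -[X in [set _; X]]Ny E // !inE eqxx ?orbT.
Qed.

Lemma improve (W U : finType) (r : W -> U -> bool) (g : rel W) k C i j
  (t1 t2 : seq W) :
  induced_solution g k C -> i < size C -> j < size C ->
  ~~ special_triangle r (nth [::] C i) -> ~~ special_triangle r (nth [::] C j) ->
  is_induced_cycle g t1 -> is_induced_cycle g t2 ->
  special_triangle r t1 -> special_triangle r t2 ->
  {subset t1 <= nth [::] C i ++ nth [::] C j} ->
  {subset t2 <= nth [::] C i ++ nth [::] C j} ->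
  (i <> j -> forall x, x \in t1 -> x \in t2 -> False) ->
  exists C', induced_solution g k C' /\
    n_special_triangles r C < n_special_triangles r C'.
Proof.
move=> [Hsol Hind] Hi Hj Nsi Nsj It1 It2 St1 St2 Ht1 Ht2 Hdisj.
pose F n := if n == i then t1 else if n == j then t2 else nth [::] C n.
have HsolC := Hsol.
case: Hsol => Hk Hcyc Hd.
have key : forall x p q, p < size C -> q < size C ->
    x \in nth [::] C p -> x \in nth [::] C q -> p = q.
  by move=> x p q Hp Hq; apply: (sol_idx HsolC).
exists (mkseq F (size C)); split.
  have HF : forall c, c \in mkseq F (size C) -> is_induced_cycle g c.
    move=> c /mapP [n]; rewrite mem_iota add0n => /andP [_ Hn] ->.
    rewrite /F; case: (eqVneq n i) => // _; case: (eqVneq n j) => // _.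
    by apply: Hind; apply: mem_nth.
  split => //; split; first by rewrite size_mkseq.
    by move=> c /HF [].
  rewrite size_mkseq => n m Hn Hm /eqP Hnm.
  rewrite !nth_mkseq //.
  rewrite disjoint_subset; apply/subsetP => x; rewrite !inE => Hxn; apply/negP => Hxm.
  move: Hxn Hxm; rewrite /F.
  case: (eqVneq n i) => [En|/eqP Nn]; case: (eqVneq n j) => [Ejn|/eqP Njn];
  case: (eqVneq m i) => [Em|/eqP Nm]; case: (eqVneq m j) => [Ejm|/eqP Njm];
  move=> Hxn Hxm; subst;
  try (by apply: (Hdisj _ x); first congruence);
  try (by apply: (Hdisj _ x); [congruence| |]);
  repeat match goal with
  | H : is_true (x \in t1) |- _ => move/Ht1: H; rewrite mem_cat => /orP [] H
  | H : is_true (x \in t2) |- _ => move/Ht2: H; rewrite mem_cat => /orP [] H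
  end;
  match goal with
  | H1 : is_true (x \in nth [::] C ?p), H2 : is_true (x \in nth [::] C ?q) |- _ =>
      have := key x p q ltac:(assumption) ltac:(assumption) H1 H2; move=> ?; congruence
  end.
rewrite /n_special_triangles.
have Hs : size C = size (mkseq F (size C)) by rewrite size_mkseq.
have Hle : forall n, n < size C -> special_triangle r (nth [::] C n) <=
      special_triangle r (nth [::] (mkseq F (size C)) n).
  move=> n Hn; rewrite nth_mkseq // /F.
  case: (eqVneq n i) => _; first by rewrite St1 leq_b1.
  case: (eqVneq n j) => _; first by rewrite St2 leq_b1.
  by [].
have [_ Hlt] := count_lt Hs Hle.
apply: Hlt; exists i => //.
by rewrite nth_mkseq // /F eqxx St1 (negbTE Nsi).
Qed.

Lemma other_end (W : finType) (g : rel W) (Hsym : forall x y, g x y = g y x)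
  e u : is_edge g e -> u \in e -> exists a, g u a /\ e = [set u; a].
Proof.
move=> [x [y [Hxy ->]]]; rewrite !inE => /orP [/eqP->|/eqP->].
  by exists y.
by exists x; rewrite Hsym setUC.
Qed.

Theorem lemma41 (W U : finType) (r : W -> U -> bool) (g : rel W) (k : nat)
  (HB : planar (bip_adj r))
  (HG : forall x y, g x y = half_square r x y)
  (Hk : 0 < k)
  (C : seq (seq W)) (HC : in_scrS r g k C)
  (s1 s2 : U) :
  ~ exists (u v : W) (e1 e2 e3 e4 : {set W}),
      [/\ u != v,
          u \in verts_of (C2_part r C) :&: special_clique r s1 :&: special_clique r s2,
          v \in verts_of (C2_part r C) :&: special_clique r s1 :&: special_clique r s2,
          uniq [:: e1; e2; e3; e4] &
          (forall e, e \in [:: e1; e2; e3; e4] -> is_edge g e)] /\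
      [/\ e1 \in edges_of (C2_part r C) /\ e1 \subset special_clique r s1,
          e2 \in edges_of (C2_part r C) /\ e2 \subset special_clique r s1,
          e3 \in edges_of (C2_part r C) /\ e3 \subset special_clique r s2,
          e4 \in edges_of (C2_part r C) /\ e4 \subset special_clique r s2 &
          [/\ u \in e1, u \in e3, v \in e2 & v \in e4]].
Proof.
move=> [u [v [e1 [e2 [e3 [e4 [[Huv Hu Hv Hun Hed]
  [[He1 S1] [He2 S2] [He3 S3] [He4 S4] [u1 u3 v2 v4]]]]]]]]].
have [Hisol Hmax] := HC.
have Hsol := Hisol.1.
have Hsym : forall x y, g x y = g y x.
  move=> x y; rewrite !HG /half_square eq_sym; congr (_ && _).
  by apply: eq_existsb => s; rewrite andbC.
have Hg0 : forall x, g x x = false by move=> x; rewrite HG /half_square eqxx.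
have gne : forall x y, g x y -> x != y.
  by move=> x y; apply: contraTneq => ->; rewrite Hg0.
have uK1 : u \in special_clique r s1 by move: Hu; rewrite !inE => /andP [/andP [_ ->]].
have uK2 : u \in special_clique r s2 by move: Hu; rewrite !inE => /andP [_ ->].
have vK1 : v \in special_clique r s1 by move: Hv; rewrite !inE => /andP [/andP [_ ->]].
have vK2 : v \in special_clique r s2 by move: Hv; rewrite !inE => /andP [_ ->].
have N13 : e1 != e3 by apply: contraTneq Hun => ->; rewrite /= !inE eqxx ?orbT ?andbF /=.
have N12 : e1 != e2 by apply: contraTneq Hun => ->; rewrite /= !inE eqxx ?orbT ?andbF /=.
have N24 : e2 != e4 by apply: contraTneq Hun => ->; rewrite /= !inE eqxx ?orbT ?andbF /=.
have [a [Hua E1]] := other_end Hsym (Hed e1 ltac:(by rewrite !inE eqxx)) u1.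
have [b [Hub E3]] := other_end Hsym (Hed e3 ltac:(by rewrite !inE eqxx ?orbT)) u3.
have [c [Hvc E2]] := other_end Hsym (Hed e2 ltac:(by rewrite !inE eqxx ?orbT)) v2.
have [d [Hvd E4]] := other_end Hsym (Hed e4 ltac:(by rewrite !inE eqxx ?orbT)) v4.
have aK1 : a \in special_clique r s1 by apply: (subsetP S1); rewrite E1 !inE eqxx orbT.
have bK2 : b \in special_clique r s2 by apply: (subsetP S3); rewrite E3 !inE eqxx orbT.
have cK1 : c \in special_clique r s1 by apply: (subsetP S2); rewrite E2 !inE eqxx orbT.
have dK2 : d \in special_clique r s2 by apply: (subsetP S4); rewrite E4 !inE eqxx orbT.
have [i1 Hi1 [Sc1 Ns1]] := edge_C2 He1.
have [i2 Hi2 [Sc2 Ns2]] := edge_C2 He2.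
have [i3 Hi3 [Sc3 Ns3]] := edge_C2 He3.
have [i4 Hi4 [Sc4 Ns4]] := edge_C2 He4.
have inC : forall (e : {set W}) i x, e \subset cverts (nth [::] C i) -> x \in e ->
    x \in nth [::] C i.
  by move=> e i x /subsetP H /H; rewrite inE.
have ui1 := inC _ _ _ Sc1 u1.
have ai1 : a \in nth [::] C i1 by apply: (inC _ _ _ Sc1); rewrite E1 !inE eqxx orbT.
have ui3 := inC _ _ _ Sc3 u3.
have bi3 : b \in nth [::] C i3 by apply: (inC _ _ _ Sc3); rewrite E3 !inE eqxx orbT.
have vi2 := inC _ _ _ Sc2 v2.
have ci2 : c \in nth [::] C i2 by apply: (inC _ _ _ Sc2); rewrite E2 !inE eqxx orbT.
have vi4 := inC _ _ _ Sc4 v4.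
have di4 : d \in nth [::] C i4 by apply: (inC _ _ _ Sc4); rewrite E4 !inE eqxx orbT.
have key : forall x p q, p < size C -> q < size C ->
    x \in nth [::] C p -> x \in nth [::] C q -> p = q.
  by move=> x p q Hp Hq; apply: (sol_idx Hsol).
have E13 : i3 = i1 by apply: (key u).
have E24 : i4 = i2 by apply: (key v).
subst i3 i4.
have contra : (exists C', induced_solution g k C' /\
    n_special_triangles r C < n_special_triangles r C') -> False.
  by move=> [C' [H1 H2]]; have := Hmax C' H1; rewrite leqNgt H2.
case: (eqVneq i1 i2) => [E12|N12'].
  subst i2.
  case: (eqVneq a v) => [Eav|Nav].
    subst a.
    have Ncu : c != u.
      apply: contraNneq N12 => Ecu; rewrite E1 E2 Ecu setUC //.
    have [It St] := triangle_ok HG uK1 vK1 cK1 Huv (gne _ _ Hvc) Ncu.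
    apply: contra; apply: (improve Hisol Hi1 Hi1 Ns1 Ns1 It It St St _ _ _) => //.
    - by move=> x; rewrite !inE mem_cat => /or3P [/eqP->|/eqP->|/eqP->]; rewrite ?ui1 ?vi2 ?ci2.
    - by move=> x; rewrite !inE mem_cat => /or3P [/eqP->|/eqP->|/eqP->]; rewrite ?ui1 ?vi2 ?ci2.
  have Nau : a != u by rewrite eq_sym gne.
  have [It St] := triangle_ok HG uK1 vK1 aK1 Huv ltac:(by rewrite eq_sym) Nau.
  apply: contra; apply: (improve Hisol Hi1 Hi1 Ns1 Ns1 It It St St _ _ _) => //.
  - by move=> x; rewrite !inE mem_cat => /or3P [/eqP->|/eqP->|/eqP->]; rewrite ?ui1 ?vi2 ?ai1.
  - by move=> x; rewrite !inE mem_cat => /or3P [/eqP->|/eqP->|/eqP->]; rewrite ?ui1 ?vi2 ?ai1.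
have dif : forall x y p q, p < size C -> q < size C -> p != q ->
    x \in nth [::] C p -> y \in nth [::] C q -> x != y.
  move=> x y p q Hp Hq /eqP Hpq Hx Hy; apply/eqP => Exy; subst y.
  by apply: Hpq; apply: (key x).
have Nac : a != c by apply: (dif _ _ i1 i2).
have Ncu : c != u by rewrite eq_sym; apply: (dif _ _ i1 i2).
have Nbd : b != d by apply: (dif _ _ i1 i2).
have Ndv : d != v by rewrite eq_sym gne.
have [It1 St1] := triangle_ok HG uK1 aK1 cK1 (gne _ _ Hua) Nac Ncu.
have [It2 St2] := triangle_ok HG vK2 bK2 dK2 ltac:(by rewrite eq_sym; apply: (dif _ _ i1 i2))
  Nbd Ndv.
apply: contra; apply: (improve Hisol Hi1 Hi2 Ns1 Ns2 It1 It2 St1 St2 _ _ _).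
- by move=> x; rewrite !inE mem_cat => /or3P [/eqP->|/eqP->|/eqP->]; rewrite ?ui1 ?ai1 ?ci2 ?orbT.
- by move=> x; rewrite !inE mem_cat => /or3P [/eqP->|/eqP->|/eqP->]; rewrite ?vi2 ?bi3 ?di4 ?orbT.
- move=> _ x; rewrite !inE => /or3P [/eqP->|/eqP->|/eqP->] /or3P [/eqP E|/eqP E|/eqP E].
  all: move: E; apply/eqP.
  all: first [ done | by rewrite gne | by rewrite eq_sym gne
             | by apply: (dif _ _ i1 i2) | by rewrite eq_sym; apply: (dif _ _ i1 i2)
             | by apply: contraNneq N13 => Eab; rewrite E1 E3 Eab
             | by apply: contraNneq N24 => Ecd; rewrite E2 E4 Ecd ].
Qed.
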